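(* Let $\lambda_v\ge0$, $r_v>0$ and $\rho_v=\lambda_v/r_v$ for $v\in V$. There exists a rate allocation scheme $\gamma$ for which the Markov process $N(t)$ is positive recurrent if and only if $\sum_{v'\in\bar{\mathcal A}(v)}\rho_{v'}<1$ for all $v\in V$.
   Context: $G=(V,E)$ is a finite directed rooted tree with vertex set $V=\{1,\dots,|V|\}$ and root $1$, edges oriented from parent to child. For $v\in V$: $\mathcal A(v)$ is the set of strict ancestors of $v$, $\bar{\mathcal A}(v)=\mathcal A(v)\cup\{v\}$. $\mathcal Z=\{z\in\{0,1\}^{V}: z_v z_{v'}=0 \text{ for all } v\in V,\ v'\in\mathcal A(v)\}$ and $\mathrm{conv}(\mathcal Z)$ is its convex hull. A rate allocation scheme is a map $\gamma:\mathbb N^{V}\to\mathrm{conv}(\mathcal Z)$. Given it, $N(t)\in\mathbb N^{V}$ is the continuous-time Markov chain (elastic traffic: flows arrive to beam $v$ as a Poisson process of rate $\lambda_v$, have exponential sizes of mean $1$, and beam $v$ serves at rate $r_v$ when active) with transition rates $n\to n+e^v$ at rate $\lambda_v$ and $n\to n-e^v$ at rate $r_v\gamma_v(n)\mathbf 1\{n_v\ge1\}$, where $e^v$ is the $v$-th canonical basis vector. *)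

(* Defs.v *)
From Stdlib Require Import Reals List Arith Bool.
Import ListNotations.
Open Scope R_scope.

(* Vertex set V = {1,...,nV}; root 1; the tree is given by a parent map
   [par] (par v is the parent of v for v in V, v <> 1; par 1 is irrelevant). *)
Definition inV (nV v : nat) : Prop := (1 <= v <= nV)%nat.

Definition is_rooted_tree (nV : nat) (par : nat -> nat) : Prop :=
  (1 <= nV)%nat /\
  (forall v, (2 <= v <= nV)%nat -> (1 <= par v <= nV)%nat) /\
  (forall v, inV nV v -> exists k, Nat.iter k par v = 1%nat).

(* u is a strict ancestor of v: u is reached by walking k >= 1 parent steps
   from v without having passed through the root 1 before.
   (Depth is < nV in a tree on nV vertices, so k ranges over 1..nV.) *)
Definition ancb (nV : nat) (par : nat -> nat) (u v : nat) : bool :=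
  existsb (fun k => Nat.eqb (Nat.iter k par v) u &&
                    forallb (fun j => negb (Nat.eqb (Nat.iter j par v) 1)) (seq 0 k))
          (seq 1 nV).

Definition ancbarb (nV : nat) (par : nat -> nat) (u v : nat) : bool :=
  Nat.eqb u v || ancb nV par u v.

Definition sumV (nV : nat) (f : nat -> R) : R :=
  fold_right (fun v acc => f v + acc) 0 (seq 1 nV).

Definition inZ (nV : nat) (par : nat -> nat) (z : nat -> bool) : Prop :=
  forall v u : nat, inV nV v -> ancb nV par u v = true -> z v = true -> z u = true -> False.

Definition in_convZ (nV : nat) (par : nat -> nat) (g : nat -> R) : Prop :=
  exists l : list (R * (nat -> bool)),
    (forall p, In p l -> 0 <= fst p /\ inZ nV par (snd p)) /\
    fold_right (fun (p : R * (nat -> bool)) (acc : R) => fst p + acc) 0 l = 1 /\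
    (forall v, inV nV v ->
       g v = fold_right (fun (p : R * (nat -> bool)) (acc : R) => (if snd p v then fst p else 0) + acc) 0 l).

(* states n in N^V are functions nat -> nat (only coordinates in V matter) *)
Definition state := nat -> nat.

Definition is_scheme (nV : nat) (par : nat -> nat) (gam : state -> nat -> R) : Prop :=
  forall n : state, in_convZ nV par (gam n).

Definition incr (x : state) (v : nat) : state :=
  fun u => if Nat.eqb u v then S (x u) else x u.
Definition decr (x : state) (v : nat) : state :=
  fun u => if Nat.eqb u v then Nat.pred (x u) else x u.
Definition zero_state : state := fun _ => 0%nat.
Definition is_zero (nV : nat) (x : state) : bool :=
  forallb (fun v => Nat.eqb (x v) 0) (seq 1 nV).

Definition drate (r : nat -> R) (gam : state -> nat -> R) (x : state) (v : nat) : R :=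
  r v * gam x v * (if Nat.leb 1 (x v) then 1 else 0).

Definition qrate (nV : nat) (lam r : nat -> R) (gam : state -> nat -> R) (x : state) : R :=
  sumV nV (fun v => lam v + drate r gam x v).

(* hit L x : probability that the embedded jump chain started at x hits 0
   for the first time at jump L (x itself counts as hitting at time 0). *)
Fixpoint hit (nV : nat) (lam r : nat -> R) (gam : state -> nat -> R)
         (L : nat) (x : state) : R :=
  match L with
  | O => if is_zero nV x then 1 else 0
  | S L' => if is_zero nV x then 0 else
      sumV nV (fun v =>
        lam v / qrate nV lam r gam x * hit nV lam r gam L' (incr x v) +
        drate r gam x v / qrate nV lam r gam x * hit nV lam r gam L' (decr x v))
  end.

(* tm L x : expected total holding time accumulated before hitting 0,
   restricted to the event of first hitting 0 at jump L. *)
Fixpoint tm (nV : nat) (lam r : nat -> R) (gam : state -> nat -> R)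
         (L : nat) (x : state) : R :=
  match L with
  | O => 0
  | S L' => if is_zero nV x then 0 else
      sumV nV (fun v =>
        lam v / qrate nV lam r gam x *
          (hit nV lam r gam L' (incr x v) / qrate nV lam r gam x
           + tm nV lam r gam L' (incr x v)) +
        drate r gam x v / qrate nV lam r gam x *
          (hit nV lam r gam L' (decr x v) / qrate nV lam r gam x
           + tm nV lam r gam L' (decr x v)))
  end.

(* starting from 0: probability of first return to 0 at jump L+1 *)
Definition ret_prob (nV : nat) (lam r : nat -> R) (gam : state -> nat -> R) (L : nat) : R :=
  let x := zero_state in
  sumV nV (fun v =>
    lam v / qrate nV lam r gam x * hit nV lam r gam L (incr x v) +
    drate r gam x v / qrate nV lam r gam x * hit nV lam r gam L (decr x v)).

(* contribution to E_0[T_0] (T_0 = first return time to 0 after the first jump,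
   including the initial holding time) of paths returning at jump L+1 *)
Definition ret_time (nV : nat) (lam r : nat -> R) (gam : state -> nat -> R) (L : nat) : R :=
  let x := zero_state in
  sumV nV (fun v =>
    lam v / qrate nV lam r gam x *
      (hit nV lam r gam L (incr x v) / qrate nV lam r gam x + tm nV lam r gam L (incr x v)) +
    drate r gam x v / qrate nV lam r gam x *
      (hit nV lam r gam L (decr x v) / qrate nV lam r gam x + tm nV lam r gam L (decr x v))).

(* positive recurrence (Norris): the state 0 is absorbing (q(0) = 0), or
   the return to 0 is almost sure and the mean return time E_0[T_0] is finite. *)
Definition positive_recurrent (nV : nat) (lam r : nat -> R) (gam : state -> nat -> R) : Prop :=
  qrate nV lam r gam zero_state = 0 \/
  (infinite_sum (ret_prob nV lam r gam) 1 /\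
   exists m, infinite_sum (ret_time nV lam r gam) m).

(* Main.v *)
Require Import Defs.
From Stdlib Require Import Reals List Arith Bool Lia Lra Classical.
Import ListNotations.

Lemma noroot_spec (par : nat -> nat) v k :
  forallb (fun j => negb (Nat.eqb (Nat.iter j par v) 1)) (seq 0 k) = true <->
  (forall j, (j < k)%nat -> Nat.iter j par v <> 1%nat).
Proof.
  rewrite forallb_forall. split.
  - intros H j Hj E. specialize (H j). rewrite in_seq in H.
    rewrite E in H. simpl in H. discriminate H. lia.
  - intros H j Hj. rewrite in_seq in Hj. apply negb_true_iff.
    apply Nat.eqb_neq. apply H. lia.
Qed.

Lemma ancb_spec nV par u v :
  ancb nV par u v = true <->
  exists k, (1 <= k <= nV)%nat /\ Nat.iter k par v = u /\
            (forall j, (j < k)%nat -> Nat.iter j par v <> 1%nat).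
Proof.
  unfold ancb. rewrite existsb_exists. split.
  - intros [k [Hk H]]. rewrite in_seq in Hk. apply andb_true_iff in H as [H1 H2].
    apply Nat.eqb_eq in H1. pose proof (proj1 (noroot_spec par v k) H2) as H3. exists k. split; [lia|]. auto.
  - intros [k [Hk [H1 H2]]]. exists k. rewrite in_seq. split; [lia|].
    apply andb_true_iff; split; [apply Nat.eqb_eq; auto|]. apply noroot_spec; auto.
Qed.

Lemma ancbarb_spec nV par u v :
  ancbarb nV par u v = true <->
  exists k, (k <= nV)%nat /\ Nat.iter k par v = u /\
            (forall j, (j < k)%nat -> Nat.iter j par v <> 1%nat).
Proof.
  unfold ancbarb. rewrite orb_true_iff, ancb_spec. split.
  - intros [H|[k [Hk H]]].
    + apply Nat.eqb_eq in H. subst. exists 0%nat. split; [lia|]. split; [reflexivity|].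
      intros; lia.
    + exists k. split; [lia|]. auto.
  - intros [k [Hk [H1 H2]]]. destruct k as [|k].
    + left. apply Nat.eqb_eq. simpl in H1. auto.
    + right. exists (S k). split; [lia|]. auto.
Qed.

Lemma iter_inV nV par v k : is_rooted_tree nV par -> inV nV v ->
  (forall j, (j < k)%nat -> Nat.iter j par v <> 1%nat) -> inV nV (Nat.iter k par v).
Proof.
  intros [H1 [H2 H3]] Hv. induction k as [|k IH]; intros Hj; simpl; auto.
  assert (inV nV (Nat.iter k par v)) as Hk by (apply IH; intros; apply Hj; lia).
  assert (Nat.iter k par v <> 1%nat) by (apply Hj; lia).
  unfold inV in *. apply H2. lia.
Qed.

Lemma min_witness (P : nat -> Prop) : (exists k, P k) ->
  exists k, P k /\ forall j, (j < k)%nat -> ~ P j.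
Proof.
  intros [k Hk]. revert Hk. induction k as [k IH] using (well_founded_induction lt_wf).
  intros Hk. destruct (classic (exists j, (j < k)%nat /\ P j)) as [[j [Hj1 Hj2]]|Hn].
  - apply (IH j Hj1 Hj2).
  - exists k. split; auto. intros j Hj Pj. apply Hn. eauto.
Qed.

Lemma depth_bound nV par v k : is_rooted_tree nV par -> inV nV v ->
  (forall j, (j < k)%nat -> Nat.iter j par v <> 1%nat) -> (k < nV)%nat.
Proof.
  intros HT Hv Hk. pose proof HT as [H1 [H2 H3]].
  destruct (min_witness (fun k => Nat.iter k par v = 1%nat) (H3 v Hv)) as [k0 [Hk0 Hmin]].
  assert (Hkk0 : (k <= k0)%nat).
  { destruct (le_lt_dec k k0); auto. exfalso. apply (Hk k0); auto. }
  assert (Hnr : forall j, (j < k0)%nat -> Nat.iter j par v <> 1%nat) by (intros j Hj E; apply (Hmin j Hj E)).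
  set (L := map (fun j => Nat.iter j par v) (seq 0 k0)).
  assert (HND : NoDup L).
  { apply NoDup_map_NoDup_ForallPairs; [|apply seq_NoDup].
    assert (Hinj : forall i j, (i < j < k0)%nat -> Nat.iter i par v = Nat.iter j par v -> False).
    { intros i j Hij E. apply (Hnr (k0 - j + i)%nat). lia.
      rewrite Nat.iter_add. rewrite E. rewrite <- Nat.iter_add.
      replace (k0 - j + j)%nat with k0 by lia. auto. }
    intros i j Hi Hj E. rewrite in_seq in Hi, Hj.
    destruct (lt_eq_lt_dec i j) as [[c|c]|c]; auto.
    - exfalso; apply (Hinj i j); [lia|auto].
    - exfalso; apply (Hinj j i); [lia|auto]. }
  assert (Hincl : incl L (seq 2 (nV - 1))).
  { intros u Hu. unfold L in Hu. apply in_map_iff in Hu as [j [E Hj]].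
    rewrite in_seq in Hj |- *. subst u.
    pose proof (iter_inV nV par v j HT Hv) as Hin.
    assert (inV nV (Nat.iter j par v)) by (apply Hin; intros; apply Hnr; lia).
    assert (Nat.iter j par v <> 1%nat) by (apply Hnr; lia).
    unfold inV in *. lia. }
  pose proof (NoDup_incl_length HND Hincl) as HL.
  unfold L in HL. rewrite length_map, !length_seq in HL.
  unfold inV in Hv. lia.
Qed.

Lemma chain_comparable nV par u v w :
  ancbarb nV par u w = true -> ancbarb nV par v w = true -> u <> v ->
  ancb nV par u v = true \/ ancb nV par v u = true.
Proof.
  rewrite !ancbarb_spec. intros [k [Hk [Hu Hku]]] [k' [Hk' [Hv Hkv]]] Hne.
  rewrite !ancb_spec.
  destruct (lt_eq_lt_dec k k') as [[c|c]|c].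
  - right. exists (k' - k)%nat. split; [lia|]. split.
    + subst. rewrite <- Nat.iter_add. f_equal. lia.
    + intros j Hj. subst u. rewrite <- Nat.iter_add. apply Hkv. lia.
  - subst. contradiction.
  - left. exists (k - k')%nat. split; [lia|]. split.
    + subst. rewrite <- Nat.iter_add. f_equal. lia.
    + intros j Hj. subst v. rewrite <- Nat.iter_add. apply Hku. lia.
Qed.

Definition top (nV : nat) (par : nat -> nat) (x : state) (a : nat) : bool :=
  Nat.leb 1 (x a) &&
  forallb (fun k => negb (forallb (fun j => negb (Nat.eqb (Nat.iter j par a) 1)) (seq 0 k))
                    || Nat.eqb (x (Nat.iter k par a)) 0) (seq 1 nV).

Lemma top_spec nV par x a :
  top nV par x a = true <->
  (1 <= x a)%nat /\ forall k, (1 <= k <= nV)%nat ->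
     (forall j, (j < k)%nat -> Nat.iter j par a <> 1%nat) -> x (Nat.iter k par a) = 0%nat.
Proof.
  unfold top. rewrite andb_true_iff, Nat.leb_le, forallb_forall. split.
  - intros [H1 H2]. split; auto. intros k Hk Hj.
    specialize (H2 k). rewrite in_seq in H2.
    assert (E : forallb (fun j => negb (Nat.eqb (Nat.iter j par a) 1)) (seq 0 k) = true)
      by (apply noroot_spec; auto).
    rewrite E in H2. simpl in H2. apply Nat.eqb_eq. apply H2. lia.
  - intros [H1 H2]. split; auto. intros k Hk. rewrite in_seq in Hk.
    apply orb_true_iff.
    destruct (forallb (fun j => negb (Nat.eqb (Nat.iter j par a) 1)) (seq 0 k)) eqn:E.
    + right. apply Nat.eqb_eq. apply H2; [lia|]. apply noroot_spec; auto.
    + left; reflexivity.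
Qed.

Lemma top_inZ nV par x : inZ nV par (top nV par x).
Proof.
  intros v u Hv Ha Hzv Hzu.
  apply ancb_spec in Ha as [k [Hk [E Hj]]].
  apply top_spec in Hzv as [_ H]. apply top_spec in Hzu as [Hu _].
  specialize (H k Hk Hj). rewrite E in H. lia.
Qed.

Lemma max_witness (P : nat -> Prop) n : (exists k, P k) -> (forall k, P k -> (k <= n)%nat) ->
  exists k, P k /\ forall k', P k' -> (k' <= k)%nat.
Proof.
  revert P. induction n as [|n IH]; intros P [k Hk] Hb.
  - exists k. split; auto. intros k' Hk'. pose proof (Hb k' Hk'). pose proof (Hb k Hk). lia.
  - destruct (classic (P (S n))) as [HS|HS].
    + exists (S n). split; auto.
    + apply IH. exists k; auto. intros k' Hk'. specialize (Hb k' Hk').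
      destruct (Nat.eq_dec k' (S n)); [subst; contradiction|lia].
Qed.

Lemma top_exists nV par x w : is_rooted_tree nV par -> inV nV w ->
  (exists u, ancbarb nV par u w = true /\ (1 <= x u)%nat) ->
  exists a, inV nV a /\ ancbarb nV par a w = true /\ top nV par x a = true.
Proof.
  intros HT Hw [u [Hu Hxu]].
  set (Q := fun k => (forall j, (j < k)%nat -> Nat.iter j par w <> 1%nat) /\
                     (1 <= x (Nat.iter k par w))%nat).
  destruct (max_witness Q nV) as [k [[Hk1 Hk2] Hmax]].
  - apply ancbarb_spec in Hu as [k [_ [E Hj]]]. exists k. split; auto. rewrite E; auto.
  - intros k [Hj _]. pose proof (depth_bound nV par w k HT Hw Hj). lia.
  - exists (Nat.iter k par w). pose proof (depth_bound nV par w k HT Hw Hk1) as Hkn.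
    split; [apply iter_inV; auto|]. split.
    + apply ancbarb_spec. exists k. split; [lia|]. auto.
    + apply top_spec. split; auto. intros m Hm Hjm.
      destruct (Nat.eq_dec (x (Nat.iter m par (Nat.iter k par w))) 0) as [E|E]; auto.
      exfalso.
      assert (HQ : Q (m + k)%nat).
      { split.
        - intros j Hj. destruct (lt_dec j k) as [c|c]; [apply Hk1; auto|].
          replace j with ((j - k) + k)%nat by lia. rewrite Nat.iter_add. apply Hjm. lia.
        - rewrite Nat.iter_add. lia. }
      specialize (Hmax _ HQ). lia.
Qed.
From Stdlib Require Import Reals List Arith Bool Lia Lra Classical.
Import ListNotations.
Open Scope R_scope.

Definition lsum (l : list nat) (f : nat -> R) : R :=
  fold_right (fun v acc => f v + acc) 0 l.

Lemma sumV_lsum nV f : sumV nV f = lsum (seq 1 nV) f.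
Proof. reflexivity. Qed.

Lemma lsum_ext l f g : (forall v, In v l -> f v = g v) -> lsum l f = lsum l g.
Proof.
  induction l as [|a l IH]; simpl; intros H; auto.
  rewrite H by auto. rewrite IH by auto. reflexivity.
Qed.

Lemma lsum_le l f g : (forall v, In v l -> f v <= g v) -> lsum l f <= lsum l g.
Proof.
  induction l as [|a l IH]; simpl; intros H; [lra|].
  apply Rplus_le_compat; auto.
Qed.

Lemma lsum_plus l f g : lsum l (fun v => f v + g v) = lsum l f + lsum l g.
Proof. induction l as [|a l IH]; simpl; [lra|]. rewrite IH; lra. Qed.

Lemma lsum_minus l f g : lsum l (fun v => f v - g v) = lsum l f - lsum l g.
Proof. induction l as [|a l IH]; simpl; [lra|]. rewrite IH; lra. Qed.

Lemma lsum_scal l c f : lsum l (fun v => c * f v) = c * lsum l f.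
Proof. induction l as [|a l IH]; simpl; [lra|]. rewrite IH; lra. Qed.

Lemma lsum_zero l : lsum l (fun _ => 0) = 0.
Proof. induction l as [|a l IH]; simpl; [lra|]. rewrite IH; lra. Qed.

Lemma lsum_nonneg l f : (forall v, In v l -> 0 <= f v) -> 0 <= lsum l f.
Proof.
  intros H. rewrite <- (lsum_zero l). apply lsum_le. auto.
Qed.

Lemma lsum_single_le l f a : (forall v, In v l -> 0 <= f v) -> In a l -> f a <= lsum l f.
Proof.
  induction l as [|b l IH]; simpl; intros H Ha; [contradiction|].
  destruct Ha as [E|Ha].
  - subst b. assert (0 <= lsum l f) by (apply lsum_nonneg; auto). lra.
  - assert (0 <= f b) by auto. assert (f a <= lsum l f) by (apply IH; auto). lra.
Qed.

Lemma lsum_indicator l a c : NoDup l -> In a l ->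
  lsum l (fun u => if Nat.eqb u a then c else 0) = c.
Proof.
  induction l as [|b l IH]; simpl; intros Hn Ha; [contradiction|].
  inversion Hn; subst.
  destruct Ha as [E|Ha].
  - subst b. rewrite Nat.eqb_refl.
    rewrite (lsum_ext l _ (fun _ => 0)). rewrite lsum_zero; lra.
    intros v Hv. destruct (Nat.eqb_spec v a); subst; [contradiction|reflexivity].
  - destruct (Nat.eqb_spec b a); subst; [contradiction|]. rewrite IH; auto; lra.
Qed.

Lemma lsum_swap l1 l2 (F : nat -> nat -> R) :
  lsum l1 (fun v => lsum l2 (fun w => F v w)) = lsum l2 (fun w => lsum l1 (fun v => F v w)).
Proof.
  induction l1 as [|a l1 IH]; simpl.
  - rewrite lsum_zero; reflexivity.
  - rewrite IH. rewrite <- lsum_plus. reflexivity.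
Qed.

Lemma lsum_pos_exists l f : 0 < lsum l f -> exists v, In v l /\ f v <> 0.
Proof.
  induction l as [|a l IH]; simpl; intros H; [lra|].
  destruct (Req_dec (f a) 0) as [E|E].
  - destruct IH as [v [Hv Hf]]; [lra|]. exists v; auto.
  - exists a; auto.
Qed.

Lemma lsum_le_one l f : NoDup l ->
  (forall v, In v l -> f v = 0 \/ f v = 1) ->
  (forall u v, In u l -> In v l -> f u = 1 -> f v = 1 -> u = v) ->
  lsum l f <= 1.
Proof.
  induction l as [|a l IH]; simpl; intros Hn H01 Hu; [lra|].
  inversion Hn; subst.
  destruct (H01 a (or_introl eq_refl)) as [E|E].
  - rewrite E. assert (lsum l f <= 1) by (apply IH; auto). lra.
  - rewrite (lsum_ext l _ (fun _ => 0)). rewrite lsum_zero; lra.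
    intros v Hv. destruct (H01 v (or_intror Hv)) as [E'|E']; auto.
    exfalso. assert (a = v) by (apply Hu; auto). subst; contradiction.
Qed.

Lemma inV_seq nV v : inV nV v <-> In v (seq 1 nV).
Proof. unfold inV. rewrite in_seq. lia. Qed.

Lemma Rdiv_le_0_compat a b : 0 <= a -> 0 < b -> 0 <= a / b.
Proof. intros. unfold Rdiv. apply Rmult_le_pos; auto. left; apply Rinv_0_lt_compat; auto. Qed.

Definition Sh (nV : nat) (h : nat -> R) (x : state) : R := sumV nV (fun u => h u * INR (x u)).

Lemma Sh_incr nV h x v : inV nV v -> Sh nV h (incr x v) = Sh nV h x + h v.
Proof.
  intros Hv. unfold Sh. rewrite !sumV_lsum.
  rewrite (lsum_ext _ _ (fun u => h u * INR (x u) + (if Nat.eqb u v then h v else 0))).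
  - rewrite lsum_plus, lsum_indicator; [reflexivity|apply seq_NoDup|apply inV_seq; auto].
  - intros u _. unfold incr. destruct (Nat.eqb_spec u v); [subst; rewrite S_INR; ring|ring].
Qed.

Lemma Sh_decr nV h x v : inV nV v -> (1 <= x v)%nat -> Sh nV h (decr x v) = Sh nV h x - h v.
Proof.
  intros Hv Hx. unfold Sh. rewrite !sumV_lsum.
  rewrite (lsum_ext _ _ (fun u => h u * INR (x u) + (if Nat.eqb u v then - h v else 0))).
  - rewrite lsum_plus, lsum_indicator; [ring|apply seq_NoDup|apply inV_seq; auto].
  - intros u _. unfold decr. destruct (Nat.eqb_spec u v).
    + subst. destruct (x v) as [|k] eqn:E; [lia|]. simpl Nat.pred. rewrite S_INR. ring.
    + ring.
Qed.

Lemma is_zero_true nV x : is_zero nV x = true -> forall u, inV nV u -> x u = 0%nat.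
Proof.
  unfold is_zero. rewrite forallb_forall. intros H u Hu. apply inV_seq in Hu.
  apply Nat.eqb_eq. auto.
Qed.

Lemma is_zero_false nV x : is_zero nV x = false -> exists u, inV nV u /\ (1 <= x u)%nat.
Proof.
  unfold is_zero. intros H. destruct (existsb (fun v => negb (Nat.eqb (x v) 0)) (seq 1 nV)) eqn:E.
  - apply existsb_exists in E as [u [Hu E]]. exists u. split; [apply inV_seq; auto|].
    apply negb_true_iff, Nat.eqb_neq in E. lia.
  - exfalso. assert (forallb (fun v => Nat.eqb (x v) 0) (seq 1 nV) = true); [|congruence].
    apply forallb_forall. intros u Hu. destruct (Nat.eqb (x u) 0) eqn:E2; auto.
    assert (existsb (fun v => negb (Nat.eqb (x v) 0)) (seq 1 nV) = true); [|congruence].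
    apply existsb_exists. exists u. rewrite E2. auto.
Qed.

Lemma Sh_zero nV h x : is_zero nV x = true -> Sh nV h x = 0.
Proof.
  intros Z. unfold Sh. rewrite sumV_lsum. rewrite <- (lsum_zero (seq 1 nV)). apply lsum_ext.
  intros u Hu. rewrite (is_zero_true nV x Z u) by (apply inV_seq; auto). simpl. ring.
Qed.

Lemma Sh_nonneg nV h x : (forall u, inV nV u -> 0 <= h u) -> 0 <= Sh nV h x.
Proof.
  intros H. unfold Sh. rewrite sumV_lsum. apply lsum_nonneg. intros u Hu.
  apply Rmult_le_pos; [apply H, inV_seq; auto|apply pos_INR].
Qed.

Lemma Sh_ext_decr0 nV h x v : x v = 0%nat -> Sh nV h (decr x v) = Sh nV h x.
Proof.
  intros E. unfold Sh. rewrite !sumV_lsum. apply lsum_ext. intros u _. unfold decr.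
  destruct (Nat.eqb_spec u v); [subst; rewrite E; reflexivity|reflexivity].
Qed.

Definition Dnat (nV : nat) (x : state) : nat := fold_right (fun u acc => (x u + acc)%nat) 0%nat (seq 1 nV).

Lemma Dnat_list_incr l x v : NoDup l -> In v l ->
  fold_right (fun u acc => (incr x v u + acc)%nat) 0%nat l = S (fold_right (fun u acc => (x u + acc)%nat) 0%nat l).
Proof.
  induction l as [|a l IH]; simpl; intros Hn Hv; [contradiction|]. inversion Hn; subst.
  unfold incr at 1. destruct Hv as [E|Hv].
  - subst a. rewrite Nat.eqb_refl. f_equal.
    assert (forall l', ~ In v l' -> fold_right (fun u acc => (incr x v u + acc)%nat) 0%nat l' =
                                  fold_right (fun u acc => (x u + acc)%nat) 0%nat l').
    { induction l' as [|b l' IH']; simpl; intros Hb; auto. unfold incr at 1.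
      destruct (Nat.eqb_spec b v); [subst; tauto|]. rewrite IH'; auto. }
    rewrite H; auto.
  - destruct (Nat.eqb_spec a v); [subst; contradiction|]. rewrite IH; auto.
Qed.

Lemma Dnat_list_decr l x v : NoDup l -> In v l -> (1 <= x v)%nat ->
  S (fold_right (fun u acc => (decr x v u + acc)%nat) 0%nat l) = fold_right (fun u acc => (x u + acc)%nat) 0%nat l.
Proof.
  induction l as [|a l IH]; simpl; intros Hn Hv Hx; [contradiction|]. inversion Hn; subst.
  unfold decr at 1. destruct Hv as [E|Hv].
  - subst a. rewrite Nat.eqb_refl.
    assert (forall l', ~ In v l' -> fold_right (fun u acc => (decr x v u + acc)%nat) 0%nat l' =
                                  fold_right (fun u acc => (x u + acc)%nat) 0%nat l').
    { induction l' as [|b l' IH']; simpl; intros Hb; auto. unfold decr at 1.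
      destruct (Nat.eqb_spec b v); [subst; tauto|]. rewrite IH'; auto. }
    rewrite H; auto. lia.
  - destruct (Nat.eqb_spec a v); [subst; contradiction|]. rewrite <- IH; auto.
Qed.

Lemma Dnat_incr nV x v : inV nV v -> Dnat nV (incr x v) = S (Dnat nV x).
Proof. intros Hv. apply Dnat_list_incr; [apply seq_NoDup|apply inV_seq; auto]. Qed.

Lemma Dnat_decr nV x v : inV nV v -> (1 <= x v)%nat -> S (Dnat nV (decr x v)) = Dnat nV x.
Proof. intros Hv Hx. apply Dnat_list_decr; auto; [apply seq_NoDup|apply inV_seq; auto]. Qed.

Lemma Dnat_INR nV x : INR (Dnat nV x) = Sh nV (fun _ => 1) x.
Proof.
  unfold Dnat, Sh. rewrite sumV_lsum. induction (seq 1 nV) as [|a l IH]; simpl; [reflexivity|].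
  rewrite plus_INR, IH. ring.
Qed.

Lemma Dnat_pos nV x : is_zero nV x = false -> (1 <= Dnat nV x)%nat.
Proof.
  intros Z. destruct (is_zero_false nV x Z) as [u [Hu Hx]].
  apply inV_seq in Hu. unfold Dnat. induction (seq 1 nV) as [|a l IH]; simpl in *; [contradiction|].
  destruct Hu as [->|Hu]; [lia|]. specialize (IH Hu). lia.
Qed.

Lemma list_min (l : list nat) (g : nat -> R) : (forall v, In v l -> 0 < g v) ->
  exists m, 0 < m /\ forall v, In v l -> m <= g v.
Proof.
  induction l as [|a l IH]; simpl; intros H.
  - exists 1. split; [lra|]. intros; contradiction.
  - destruct IH as [m [Hm Hm']]; auto.
    exists (Rmin m (g a)). split.
    + apply Rmin_glb_lt; auto.
    + intros v [<-|Hv]; [apply Rmin_r|]. eapply Rle_trans; [apply Rmin_l|auto].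
Qed.

Section Ops.
Variable nV : nat.
Variable lam r : nat -> R.
Variable gam : state -> nat -> R.
Hypothesis Hlam : forall v, inV nV v -> 0 <= lam v.
Hypothesis Hr : forall v, inV nV v -> 0 < r v.
Hypothesis Hg0 : forall x v, inV nV v -> 0 <= gam x v.
Hypothesis Hg1 : forall x v, inV nV v -> gam x v <= 1.

Definition q x := qrate nV lam r gam x.
Definition dr x v := drate r gam x v.
Definition Pop (f : state -> R) (x : state) : R :=
  sumV nV (fun v => lam v / q x * f (incr x v) + dr x v / q x * f (decr x v)).
Definition Gen (f : state -> R) (x : state) : R :=
  sumV nV (fun v => lam v * (f (incr x v) - f x) + dr x v * (f (decr x v) - f x)).

Lemma dr_nonneg x v : inV nV v -> 0 <= dr x v.
Proof.
  intros Hv. unfold dr, drate. specialize (Hr v Hv). specialize (Hg0 x v Hv).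
  destruct (Nat.leb 1 (x v)); [rewrite Rmult_1_r|rewrite Rmult_0_r; lra].
  apply Rmult_le_pos; lra.
Qed.

Lemma dr_le x v : inV nV v -> dr x v <= r v.
Proof.
  intros Hv. unfold dr, drate. specialize (Hr v Hv). specialize (Hg0 x v Hv).
  specialize (Hg1 x v Hv).
  destruct (Nat.leb 1 (x v)); [rewrite Rmult_1_r|rewrite Rmult_0_r; lra].
  rewrite <- (Rmult_1_r (r v)) at 2. apply Rmult_le_compat_l; lra.
Qed.

Lemma dr_zero x v : x v = 0%nat -> dr x v = 0.
Proof. intros E. unfold dr, drate. rewrite E. simpl. ring. Qed.

Definition Lam := sumV nV lam.
Definition Qmax := sumV nV (fun v => lam v + r v).

Lemma q_ge x : Lam <= q x.
Proof.
  unfold Lam, q, qrate. rewrite !sumV_lsum. apply lsum_le. intros v Hv.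
  apply inV_seq in Hv. pose proof (dr_nonneg x v Hv). unfold dr in *. lra.
Qed.

Lemma q_le x : q x <= Qmax.
Proof.
  unfold Qmax, q, qrate. rewrite !sumV_lsum. apply lsum_le. intros v Hv.
  apply inV_seq in Hv. pose proof (dr_le x v Hv). unfold dr in *. lra.
Qed.

Lemma Lam_nonneg : 0 <= Lam.
Proof. unfold Lam. rewrite sumV_lsum. apply lsum_nonneg. intros v Hv. apply Hlam, inV_seq, Hv. Qed.

Hypothesis Hq : forall x, 0 < q x.

Lemma Pop_mono_nb f g x :
  (forall v, inV nV v -> f (incr x v) <= g (incr x v) /\ f (decr x v) <= g (decr x v)) ->
  Pop f x <= Pop g x.
Proof.
  intros H. unfold Pop. rewrite !sumV_lsum. apply lsum_le. intros v Hv.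
  apply inV_seq in Hv. destruct (H v Hv) as [H1 H2].
  pose proof (Hq x). pose proof (Hlam v Hv). pose proof (dr_nonneg x v Hv).
  assert (0 <= lam v / q x) by (apply Rdiv_le_0_compat; lra).
  assert (0 <= dr x v / q x) by (apply Rdiv_le_0_compat; lra).
  apply Rplus_le_compat; apply Rmult_le_compat_l; auto.
Qed.

Lemma Pop_mono f g x : (forall y, f y <= g y) -> Pop f x <= Pop g x.
Proof. intros H. apply Pop_mono_nb. auto. Qed.

Lemma Pop_plus f g x : Pop (fun y => f y + g y) x = Pop f x + Pop g x.
Proof.
  unfold Pop. rewrite !sumV_lsum. rewrite <- lsum_plus. apply lsum_ext. intros; ring.
Qed.

Lemma Pop_scal c f x : Pop (fun y => c * f y) x = c * Pop f x.
Proof.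
  unfold Pop. rewrite !sumV_lsum. rewrite <- lsum_scal. apply lsum_ext. intros; ring.
Qed.

Lemma Pop_const c x : Pop (fun _ => c) x = c.
Proof.
  unfold Pop. rewrite sumV_lsum.
  rewrite (lsum_ext _ _ (fun v => c / q x * (lam v + dr x v))).
  - rewrite lsum_scal. pose proof (Hq x) as Hqx. unfold q, qrate in *. unfold dr.
    rewrite sumV_lsum in *. field. lra.
  - intros; unfold Rdiv; ring.
Qed.

Lemma Pop_ext f g x : (forall y, f y = g y) -> Pop f x = Pop g x.
Proof. intros H. unfold Pop. rewrite !sumV_lsum. apply lsum_ext. intros; rewrite !H; auto. Qed.

Lemma Pop_Gen f x : Pop f x = f x + Gen f x / q x.
Proof.
  assert (E : Pop f x = Pop (fun y => f x + (f y - f x)) x) by (apply Pop_ext; intros; ring).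
  rewrite E, Pop_plus, Pop_const. f_equal.
  unfold Pop, Gen. rewrite !sumV_lsum. unfold Rdiv at 3. rewrite Rmult_comm.
  rewrite <- lsum_scal. apply lsum_ext. intros. unfold Rdiv. ring.
Qed.

Lemma Pop_single f x v : inV nV v ->
  (forall u, inV nV u -> 0 <= f (incr x u) /\ 0 <= f (decr x u)) ->
  lam v / q x * f (incr x v) <= Pop f x.
Proof.
  intros Hv H. unfold Pop. rewrite sumV_lsum.
  apply Rle_trans with (lam v / q x * f (incr x v) + dr x v / q x * f (decr x v)).
  - pose proof (Hq x). pose proof (dr_nonneg x v Hv). destruct (H v Hv).
    assert (0 <= dr x v / q x) by (apply Rdiv_le_0_compat; lra).
    assert (0 <= dr x v / q x * f (decr x v)) by (apply Rmult_le_pos; auto). lra.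
  - apply (lsum_single_le _ (fun v => lam v / q x * f (incr x v) + dr x v / q x * f (decr x v))).
    + intros u Hu. apply inV_seq in Hu. pose proof (Hq x). pose proof (dr_nonneg x u Hu).
      pose proof (Hlam u Hu). destruct (H u Hu).
      assert (0 <= lam u / q x) by (apply Rdiv_le_0_compat; lra).
      assert (0 <= dr x u / q x) by (apply Rdiv_le_0_compat; lra).
      apply Rplus_le_le_0_compat; apply Rmult_le_pos; auto.
    + apply inV_seq; auto.
Qed.

Lemma Pop_sum (F : nat -> state -> R) N x :
  sum_f_R0 (fun L => Pop (F L) x) N = Pop (fun y => sum_f_R0 (fun L => F L y) N) x.
Proof.
  induction N as [|N IH]; simpl; [reflexivity|].
  rewrite IH. rewrite <- Pop_plus. reflexivity.
Qed.

Definition hitf L x := hit nV lam r gam L x.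
Definition tmf L x := tm nV lam r gam L x.

Lemma hit_S L x : hitf (S L) x = if is_zero nV x then 0 else Pop (hitf L) x.
Proof. reflexivity. Qed.
Lemma tm_S L x : tmf (S L) x =
  if is_zero nV x then 0 else Pop (fun y => hitf L y / q x + tmf L y) x.
Proof. reflexivity. Qed.

Lemma hit_nonneg L x : 0 <= hitf L x.
Proof.
  revert x; induction L as [|L IH]; intros x.
  - unfold hitf; simpl. destruct (is_zero nV x); lra.
  - rewrite hit_S. destruct (is_zero nV x); [lra|].
    rewrite <- (Pop_const 0 x). apply Pop_mono. auto.
Qed.

Lemma tm_nonneg L x : 0 <= tmf L x.
Proof.
  revert x; induction L as [|L IH]; intros x.
  - unfold tmf; simpl. lra.
  - rewrite tm_S. destruct (is_zero nV x); [lra|].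
    rewrite <- (Pop_const 0 x). apply Pop_mono. intros y.
    pose proof (hit_nonneg L y). pose proof (Hq x). pose proof (IH y).
    assert (0 <= hitf L y / q x) by (apply Rdiv_le_0_compat; lra). lra.
Qed.

Fixpoint Gt (N : nat) (x : state) : R :=
  match N with
  | O => if is_zero nV x then 0 else 1
  | S N' => if is_zero nV x then 0 else Pop (Gt N') x
  end.

Definition HH N x := sum_f_R0 (fun L => hitf L x) N.
Definition TT N x := sum_f_R0 (fun L => tmf L x) N.

Lemma sum_zero N : sum_f_R0 (fun _ => 0) N = 0.
Proof. induction N; simpl; lra. Qed.

Lemma HH_S N x : HH (S N) x = if is_zero nV x then 1 else Pop (HH N) x.
Proof.
  unfold HH. rewrite decomp_sum by lia. simpl pred.
  unfold hitf at 1. simpl hit.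
  destruct (is_zero nV x) eqn:Z.
  - rewrite (sum_eq _ (fun _ => 0)). rewrite sum_zero; ring.
    intros i _. rewrite hit_S. rewrite Z. reflexivity.
  - rewrite (sum_eq _ (fun L => Pop (hitf L) x)).
    + rewrite Pop_sum. ring.
    + intros i _. rewrite hit_S, Z. reflexivity.
Qed.

Lemma sum_lin (a b : nat -> R) c N :
  sum_f_R0 (fun L => a L / c + b L) N = sum_f_R0 a N / c + sum_f_R0 b N.
Proof. induction N as [|N IH]; simpl; [reflexivity|]. rewrite IH. unfold Rdiv; ring. Qed.

Lemma TT_S N x : TT (S N) x = if is_zero nV x then 0 else Pop (fun y => HH N y / q x + TT N y) x.
Proof.
  unfold TT. rewrite decomp_sum by lia. simpl pred.
  unfold tmf at 1. simpl tm.
  destruct (is_zero nV x) eqn:Z.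
  - rewrite (sum_eq _ (fun _ => 0)). rewrite sum_zero; ring.
    intros i _. rewrite tm_S. rewrite Z. reflexivity.
  - rewrite (sum_eq _ (fun L => Pop (fun y => hitf L y / q x + tmf L y) x)).
    + rewrite Pop_sum. rewrite Rplus_0_l. apply Pop_ext. intros y. rewrite sum_lin. reflexivity.
    + intros i _. rewrite tm_S, Z. reflexivity.
Qed.

Lemma HH_G N x : HH N x + Gt N x = 1.
Proof.
  revert x; induction N as [|N IH]; intros x.
  - unfold HH, hitf; simpl. destruct (is_zero nV x); lra.
  - rewrite HH_S. simpl Gt. destruct (is_zero nV x); [lra|].
    rewrite <- Pop_plus. rewrite (Pop_ext _ (fun _ => 1)) by auto. apply Pop_const.
Qed.

Lemma Gt_nonneg N x : 0 <= Gt N x.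
Proof.
  revert x; induction N as [|N IH]; intros x; simpl; destruct (is_zero nV x); try lra.
  rewrite <- (Pop_const 0 x). apply Pop_mono. auto.
Qed.

Lemma Gt_le1 N x : Gt N x <= 1.
Proof.
  revert x; induction N as [|N IH]; intros x; simpl; destruct (is_zero nV x); try lra.
  rewrite <- (Pop_const 1 x). apply Pop_mono. auto.
Qed.

Lemma HH_bounds N x : 0 <= HH N x <= 1.
Proof. pose proof (HH_G N x). pose proof (Gt_nonneg N x). pose proof (Gt_le1 N x). lra. Qed.

Lemma TT_nonneg N x : 0 <= TT N x.
Proof.
  unfold TT. induction N as [|N IH]; simpl; [apply tm_nonneg|].
  pose proof (tm_nonneg (S N) x). lra.
Qed.

Lemma ret_prob_sum N :
  sum_f_R0 (ret_prob nV lam r gam) N = 1 - Pop (Gt N) zero_state.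
Proof.
  rewrite (sum_eq _ (fun L => Pop (hitf L) zero_state)) by reflexivity.
  rewrite Pop_sum. rewrite <- (Pop_const 1 zero_state).
  replace (Pop (fun _ => 1) zero_state - Pop (Gt N) zero_state)
    with (Pop (fun _ => 1) zero_state + (-1) * Pop (Gt N) zero_state) by ring.
  rewrite <- Pop_scal, <- Pop_plus. apply Pop_ext. intros y.
  pose proof (HH_G N y). unfold HH in H. lra.
Qed.

Lemma ret_time_sum N :
  sum_f_R0 (ret_time nV lam r gam) N =
  Pop (fun y => HH N y / q zero_state + TT N y) zero_state.
Proof.
  rewrite (sum_eq _ (fun L => Pop (fun y => hitf L y / q zero_state + tmf L y) zero_state)) by reflexivity.
  rewrite Pop_sum. apply Pop_ext. intros y. rewrite sum_lin. reflexivity.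
Qed.

Lemma ret_time_nonneg L : 0 <= ret_time nV lam r gam L.
Proof.
  change (ret_time nV lam r gam L) with (Pop (fun y => hitf L y / q zero_state + tmf L y) zero_state).
  rewrite <- (Pop_const 0 zero_state). apply Pop_mono. intros y.
  pose proof (hit_nonneg L y). pose proof (tm_nonneg L y). pose proof (Hq zero_state).
  assert (0 <= hitf L y / q zero_state) by (apply Rdiv_le_0_compat; lra). lra.
Qed.

Fixpoint KK (N : nat) (x : state) : R :=
  match N with
  | O => 0
  | S N' => if is_zero nV x then 0 else 1 + Pop (KK N') x
  end.

Lemma KK_S N x : KK (S N) x = KK N x + Gt N x.
Proof.
  revert x; induction N as [|N IH]; intros x.
  - change (KK 1 x) with (if is_zero nV x then 0 else 1 + Pop (KK 0) x).
    change (KK 0 x) with 0. simpl Gt. destruct (is_zero nV x); [lra|].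
    rewrite (Pop_ext _ (fun _ => 0)) by reflexivity.
    rewrite Pop_const. lra.
  - change (KK (S (S N)) x) with (if is_zero nV x then 0 else 1 + Pop (KK (S N)) x).
    change (KK (S N) x) with (if is_zero nV x then 0 else 1 + Pop (KK N) x).
    simpl Gt. destruct (is_zero nV x); [lra|].
    rewrite (Pop_ext _ (fun y => KK N y + Gt N y)) by auto. rewrite Pop_plus. lra.
Qed.

Lemma Gt_decr N x : Gt (S N) x <= Gt N x.
Proof.
  revert x; induction N as [|N IH]; intros x.
  - change (Gt 1 x) with (if is_zero nV x then 0 else Pop (Gt 0) x).
    change (Gt 0 x) with (if is_zero nV x then 0 else 1).
    destruct (is_zero nV x); [lra|]. rewrite <- (Pop_const 1 x).
    apply Pop_mono. intros y. apply Gt_le1.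
  - change (Gt (S (S N)) x) with (if is_zero nV x then 0 else Pop (Gt (S N)) x).
    change (Gt (S N) x) with (if is_zero nV x then 0 else Pop (Gt N) x).
    destruct (is_zero nV x); [lra|]. apply Pop_mono. auto.
Qed.


Lemma Pop_minus f g x : Pop (fun y => f y - g y) x = Pop f x - Pop g x.
Proof.
  rewrite (Pop_ext _ (fun y => f y + (-1) * g y)) by (intros; ring).
  rewrite Pop_plus, Pop_scal. ring.
Qed.

Lemma Pop_affine a f b x : Pop (fun y => a * f y + b) x = a * Pop f x + b.
Proof. rewrite Pop_plus, Pop_scal, Pop_const. reflexivity. Qed.

Section Suff.
Variable U : state -> R.
Hypothesis HU0 : forall x, 0 <= U x.
Hypothesis HUd : forall x, is_zero nV x = false -> Pop U x <= U x - 1.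
Hypothesis HLam : 0 < Lam.

Lemma KK_le_U N x : KK N x <= U x.
Proof.
  revert x; induction N as [|N IH]; intros x; [simpl; apply HU0|].
  change (KK (S N) x) with (if is_zero nV x then 0 else 1 + Pop (KK N) x).
  destruct (is_zero nV x) eqn:Z; [apply HU0|].
  pose proof (HUd x Z). pose proof (Pop_mono _ _ x IH). lra.
Qed.

Lemma NG_le N x : INR (S N) * Gt N x <= KK (S N) x.
Proof.
  revert x; induction N as [|N IH]; intros x.
  - rewrite KK_S. simpl KK. simpl INR. lra.
  - change (KK (S (S N)) x) with (if is_zero nV x then 0 else 1 + Pop (KK (S N)) x).
    change (Gt (S N) x) with (if is_zero nV x then 0 else Pop (Gt N) x).
    destruct (is_zero nV x); [lra|].
    pose proof (Pop_mono _ _ x IH) as H. rewrite Pop_scal in H.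
    pose proof (Gt_le1 (S N) x) as H1. simpl Gt in H1.
    rewrite S_INR. 
    assert (Pop (Gt N) x <= 1).
    { rewrite <- (Pop_const 1 x). apply Pop_mono. intros; apply Gt_le1. }
    nra.
Qed.

Lemma Gt_le_U N x : Gt N x <= U x / INR (S N).
Proof.
  pose proof (NG_le N x). pose proof (KK_le_U (S N) x).
  assert (0 < INR (S N)) by (apply lt_0_INR; lia).
  apply Rmult_le_reg_l with (INR (S N)); auto. field_simplify; lra.
Qed.

Lemma TT_le_U N x : TT N x <= U x / Lam.
Proof.
  revert x; induction N as [|N IH]; intros x.
  - unfold TT, tmf; simpl. apply Rdiv_le_0_compat; auto.
  - rewrite TT_S. destruct (is_zero nV x) eqn:Z; [apply Rdiv_le_0_compat; auto|].
    apply Rle_trans with (Pop (fun y => / Lam * U y + / Lam) x).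
    + apply Pop_mono. intros y. pose proof (IH y). pose proof (HH_bounds N y).
      pose proof (q_ge x).
      assert (HH N y / q x <= / Lam).
      { unfold Rdiv. apply Rle_trans with (1 * / q x).
        - apply Rmult_le_compat_r; [left; apply Rinv_0_lt_compat; lra|lra].
        - rewrite Rmult_1_l. apply Rinv_le_contravar; lra. }
      unfold Rdiv in *. lra.
    + rewrite Pop_affine. pose proof (HUd x Z).
      assert (0 < / Lam) by (apply Rinv_0_lt_compat; auto).
      unfold Rdiv. nra.
Qed.

Lemma suff_main :
  infinite_sum (ret_prob nV lam r gam) 1 /\ exists m, infinite_sum (ret_time nV lam r gam) m.
Proof.
  split.
  - intros eps Heps.
    destruct (INR_archimed eps (Pop U zero_state) Heps) as [N0 HN0].
    exists N0. intros n Hn. rewrite ret_prob_sum. unfold Rdist.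
    replace (1 - Pop (Gt n) zero_state - 1) with (- Pop (Gt n) zero_state) by ring.
    rewrite Rabs_Ropp. rewrite Rabs_right.
    2:{ apply Rle_ge. rewrite <- (Pop_const 0 zero_state). apply Pop_mono. intros; apply Gt_nonneg. }
    apply Rle_lt_trans with (Pop (fun y => / INR (S n) * U y) zero_state).
    + apply Pop_mono. intros y. pose proof (Gt_le_U n y). unfold Rdiv in H. lra.
    + rewrite Pop_scal.
      assert (INR N0 <= INR n) by (apply le_INR; lia).
      assert (INR n < INR (S n)) by (apply lt_INR; lia).
      assert (0 < INR (S n)) by (apply lt_0_INR; lia).
      apply Rmult_lt_reg_l with (INR (S n)); auto.
      rewrite <- Rmult_assoc, Rinv_r by lra. nra.
  - set (Un := sum_f_R0 (ret_time nV lam r gam)).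
    assert (Hg : Un_growing Un).
    { intros n. unfold Un. simpl. pose proof (ret_time_nonneg (S n)). lra. }
    assert (Hb : has_ub Un).
    { exists (Pop (fun y => / Lam * U y + / Lam) zero_state).
      intros z [i ->]. unfold Un. rewrite ret_time_sum. apply Pop_mono. intros y.
      pose proof (TT_le_U i y). pose proof (HH_bounds i y). pose proof (q_ge zero_state).
      assert (HH i y / q zero_state <= / Lam).
      { unfold Rdiv. apply Rle_trans with (1 * / q zero_state).
        - apply Rmult_le_compat_r; [left; apply Rinv_0_lt_compat; lra|lra].
        - rewrite Rmult_1_l. apply Rinv_le_contravar; lra. }
      unfold Rdiv in *. lra. }
    destruct (growing_cv Un Hg Hb) as [l Hl]. exists l. exact Hl.
Qed.
End Suff.

Fixpoint hs (n : nat) : R := match n with O => 0 | S n' => hs n' + / (INR n' + 1) end.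

Lemma ln_hs n : ln (INR n + 1) <= hs n.
Proof.
  induction n as [|n IH].
  - simpl. rewrite Rplus_0_l, ln_1. lra.
  - simpl hs. rewrite S_INR.
    assert (0 < INR n + 1) by (pose proof (pos_INR n); lra).
    replace (INR n + 1 + 1) with ((INR n + 1) * (1 + / (INR n + 1))) by (field; lra).
    rewrite ln_mult by (try lra; pose proof (Rinv_0_lt_compat _ H); lra).
    assert (ln (1 + / (INR n + 1)) <= / (INR n + 1)).
    { left. pose proof (Rinv_0_lt_compat _ H).
      rewrite <- (ln_exp (/ (INR n + 1))) at 2. apply ln_increasing; [lra|].
      apply exp_ineq1. lra. }
    lra.
Qed.

Lemma hs_unbounded T : exists n, T < hs n.
Proof.
  destruct (INR_archimed 1 (exp T)) as [n Hn]; [lra|].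
  exists n. eapply Rlt_le_trans; [|apply ln_hs].
  rewrite <- (ln_exp T) at 1. apply ln_increasing; [apply exp_pos|lra].
Qed.

Section Nec.
Variable W : state -> R.
Variable c : R.
Variable v0 : nat.
Hypothesis HW0 : forall x, 0 <= W x.
Hypothesis HWz : forall x, is_zero nV x = true -> W x = 0.
Hypothesis HWd : forall x, is_zero nV x = false -> W x <= Pop W x.
Hypothesis HWn : forall x v, inV nV v -> W (incr x v) <= W x + c /\ W (decr x v) <= W x + c.
Hypothesis Hc : 0 <= c.
Hypothesis Hv0 : inV nV v0.
Hypothesis Hlv0 : 0 < lam v0.
Hypothesis HWv0 : 0 < W (incr zero_state v0).

Fixpoint Ef (N : nat) (x : state) : R :=
  match N with
  | O => if is_zero nV x then 0 else W x
  | S N' => if is_zero nV x then 0 else Pop (Ef N') x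
  end.

Lemma Ef_ge N x : W x <= Ef N x.
Proof.
  revert x; induction N as [|N IH]; intros x; simpl; destruct (is_zero nV x) eqn:Z;
    try (rewrite HWz by auto; lra); try lra.
  eapply Rle_trans; [apply HWd; auto|]. apply Pop_mono. auto.
Qed.

Lemma Ef_le N x : Ef N x <= (W x + INR N * c) * Gt N x.
Proof.
  revert x; induction N as [|N IH]; intros x.
  - simpl. destruct (is_zero nV x); lra.
  - change (Ef (S N) x) with (if is_zero nV x then 0 else Pop (Ef N) x).
    change (Gt (S N) x) with (if is_zero nV x then 0 else Pop (Gt N) x).
    destruct (is_zero nV x); [lra|].
    apply Rle_trans with (Pop (fun y => (W x + INR (S N) * c) * Gt N y) x).
    + apply Pop_mono_nb. intros v Hv. destruct (HWn x v Hv) as [H1 H2].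
      rewrite S_INR. split.
      * eapply Rle_trans; [apply IH|]. apply Rmult_le_compat_r; [apply Gt_nonneg|]. lra.
      * eapply Rle_trans; [apply IH|]. apply Rmult_le_compat_r; [apply Gt_nonneg|]. lra.
    + rewrite Pop_scal. lra.
Qed.

Lemma Gt_lower N x : 0 < W x -> W x / (W x + INR N * c) <= Gt N x.
Proof.
  intros Hp. pose proof (Ef_ge N x). pose proof (Ef_le N x).
  assert (0 <= INR N * c) by (apply Rmult_le_pos; [apply pos_INR|auto]).
  apply Rmult_le_reg_l with (W x + INR N * c); [lra|]. field_simplify; lra.
Qed.

Lemma TT_lower N x : KK N x - INR N * Gt N x <= Qmax * TT N x.
Proof.
  revert x; induction N as [|N IH]; intros x.
  - unfold TT, tmf; simpl. lra.
  - rewrite TT_S.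
    change (KK (S N) x) with (if is_zero nV x then 0 else 1 + Pop (KK N) x).
    change (Gt (S N) x) with (if is_zero nV x then 0 else Pop (Gt N) x).
    destruct (is_zero nV x); [lra|].
    assert (E : 1 + Pop (KK N) x - INR (S N) * Pop (Gt N) x =
                Pop (fun y => (KK N y - INR N * Gt N y) + HH N y) x).
    { rewrite Pop_plus, Pop_minus, Pop_scal.
      rewrite (Pop_ext (HH N) (fun y => 1 + (-1) * Gt N y)).
      - rewrite Pop_plus, Pop_scal, Pop_const. rewrite S_INR. ring.
      - intros y. pose proof (HH_G N y). lra. }
    rewrite E. rewrite <- Pop_scal. apply Pop_mono. intros y.
    pose proof (IH y). pose proof (HH_bounds N y). pose proof (q_le x). pose proof (Hq x).
    assert (1 <= Qmax / q x).
    { apply Rmult_le_reg_l with (q x); auto. field_simplify; lra. }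
    assert (HH N y <= Qmax / q x * HH N y) by nra.
    unfold Rdiv in *. nra.
Qed.

Lemma KK_diff n0 N x : (n0 <= N)%nat -> KK n0 x + INR (N - n0) * Gt N x <= KK N x.
Proof.
  intros H. induction H as [|N H IH].
  - rewrite Nat.sub_diag. simpl. lra.
  - rewrite KK_S. replace (S N - n0)%nat with (S (N - n0)) by lia. rewrite S_INR.
    pose proof (Gt_decr N x). pose proof (Gt_nonneg (S N) x).
    assert (0 <= INR (N - n0)) by apply pos_INR. nra.
Qed.

Lemma KK_hs n x : 0 < W x -> W x / (W x + c) * hs n <= KK n x.
Proof.
  intros Hp. induction n as [|n IH].
  - simpl. lra.
  - rewrite KK_S. simpl hs. pose proof (Gt_lower n x Hp).
    assert (W x / (W x + c) * / (INR n + 1) <= W x / (W x + INR n * c)).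
    { pose proof (pos_INR n).
      unfold Rdiv. rewrite Rmult_assoc. apply Rmult_le_compat_l; [lra|].
      rewrite <- Rinv_mult. apply Rinv_le_contravar.
      - assert (0 <= INR n * c) by (apply Rmult_le_pos; lra). lra.
      - nra. }
    lra.
Qed.

Lemma sum_le_limit (s : nat -> R) m N : (forall n, 0 <= s n) -> infinite_sum s m ->
  sum_f_R0 s N <= m.
Proof.
  intros Hs Hi.
  assert (Hmon : forall k, sum_f_R0 s N <= sum_f_R0 s (N + k)).
  { induction k as [|k IHk]. rewrite Nat.add_0_r; lra.
    rewrite Nat.add_succ_r. simpl. pose proof (Hs (S (N + k))). lra. }
  destruct (Rle_lt_dec (sum_f_R0 s N) m) as [H|H]; auto.
  exfalso. destruct (Hi (sum_f_R0 s N - m)) as [N0 HN0]; [lra|].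
  specialize (HN0 (N + N0)%nat ltac:(lia)). pose proof (Hmon N0).
  unfold Rdist in HN0. rewrite Rabs_right in HN0 by lra. lra.
Qed.

Lemma nec_main :
  ~ (infinite_sum (ret_prob nV lam r gam) 1 /\ exists m, infinite_sum (ret_time nV lam r gam) m).
Proof.
  intros [Hp [m Hm]].
  set (y0 := incr zero_state v0). set (q0 := q zero_state).
  pose proof (Hq zero_state) as Hq0. fold q0 in Hq0.
  assert (Hnb : forall f, (forall y, 0 <= f y) -> lam v0 / q0 * f y0 <= Pop f zero_state).
  { intros f Hf. apply Pop_single; auto. }
  assert (Hw0 : 0 < lam v0 / q0) by (apply Rdiv_lt_0_compat; auto).
  assert (HT : forall N, TT N y0 <= m / (lam v0 / q0)).
  { intros N. pose proof (sum_le_limit _ m N ret_time_nonneg Hm) as H.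
    rewrite ret_time_sum in H.
    assert (lam v0 / q0 * TT N y0 <= m).
    { eapply Rle_trans; [|apply H].
      eapply Rle_trans; [|apply Hnb].
      - apply Rmult_le_compat_l; [lra|]. pose proof (HH_bounds N y0).
        assert (0 <= HH N y0 / q zero_state) by (apply Rdiv_le_0_compat; [lra|apply Hq]). lra.
      - intros y. pose proof (HH_bounds N y). pose proof (TT_nonneg N y).
        assert (0 <= HH N y / q zero_state) by (apply Rdiv_le_0_compat; [lra|apply Hq]). lra. }
    apply Rmult_le_reg_l with (lam v0 / q0); auto.
    replace (lam v0 / q0 * (m / (lam v0 / q0))) with m; [lra|].
    field. split; apply Rgt_not_eq; auto. }
  set (M1 := m / (lam v0 / q0)).
  set (W0 := W y0).
  assert (HW0p : 0 < W0) by apply HWv0.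
  set (alpha := W0 / (W0 + c)).
  assert (Ha : 0 < alpha) by (apply Rdiv_lt_0_compat; lra).
  destruct (hs_unbounded ((Qmax * M1 + 1) / alpha)) as [n0 Hn0].
  assert (Hn0' : Qmax * M1 + 1 < alpha * hs n0).
  { apply Rmult_lt_compat_l with (r := alpha) in Hn0; auto.
    field_simplify in Hn0; lra. }
  set (delta := / (INR n0 + 1)).
  assert (Hd : 0 < delta) by (apply Rinv_0_lt_compat; pose proof (pos_INR n0); lra).
  destruct (Hp (lam v0 / q0 * delta)) as [N0 HN0]; [apply Rmult_lt_0_compat; auto|].
  set (N := (n0 + N0)%nat).
  specialize (HN0 N ltac:(unfold N; lia)).
  rewrite ret_prob_sum in HN0. unfold Rdist in HN0.
  replace (1 - Pop (Gt N) zero_state - 1) with (- Pop (Gt N) zero_state) in HN0 by ring.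
  rewrite Rabs_Ropp in HN0.
  assert (Hg : lam v0 / q0 * Gt N y0 <= Pop (Gt N) zero_state)
    by (apply Hnb; intros; apply Gt_nonneg).
  assert (HGN : Gt N y0 < delta).
  { pose proof (Gt_nonneg N y0).
    assert (0 <= lam v0 / q0 * Gt N y0) by (apply Rmult_le_pos; lra).
    assert (0 <= Pop (Gt N) zero_state) by lra.
    rewrite Rabs_right in HN0 by lra.
    apply Rmult_lt_reg_l with (lam v0 / q0); auto. lra. }
  pose proof (KK_hs n0 y0 HWv0) as H1. fold W0 in H1. fold alpha in H1.
  pose proof (KK_diff n0 N y0 ltac:(unfold N; lia)) as H2.
  pose proof (TT_lower N y0) as H3.
  pose proof (HT N) as H4. fold M1 in H4.
  assert (HQ : 0 <= Qmax) by (pose proof (q_le zero_state); pose proof (Hq zero_state); lra).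
  rewrite minus_INR in H2 by (unfold N; lia).
  assert (INR n0 * Gt N y0 < 1).
  { pose proof (pos_INR n0). pose proof (Gt_nonneg N y0).
    unfold delta in HGN.
    apply Rle_lt_trans with (INR n0 * / (INR n0 + 1)).
    - apply Rmult_le_compat_l; lra.
    - apply Rmult_lt_reg_l with (INR n0 + 1); [lra|]. field_simplify; lra. }
  assert (Qmax * TT N y0 <= Qmax * M1) by (apply Rmult_le_compat_l; auto).
  lra.
Qed.
End Nec.

Lemma Gen_plus f g x : Gen (fun y => f y + g y) x = Gen f x + Gen g x.
Proof. unfold Gen. rewrite !sumV_lsum, <- lsum_plus. apply lsum_ext. intros; ring. Qed.

Lemma Gen_scal a f x : Gen (fun y => a * f y) x = a * Gen f x.
Proof. unfold Gen. rewrite !sumV_lsum, <- lsum_scal. apply lsum_ext. intros; ring. Qed.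

Lemma Gen_sumw (F : nat -> state -> R) x :
  Gen (fun y => sumV nV (fun w => F w y)) x = sumV nV (fun w => Gen (F w) x).
Proof.
  unfold Gen. rewrite !sumV_lsum.
  rewrite (lsum_ext _ _ (fun v => lsum (seq 1 nV) (fun w =>
      lam v * (F w (incr x v) - F w x) + dr x v * (F w (decr x v) - F w x)))).
  - apply lsum_swap.
  - intros v _. rewrite !sumV_lsum. rewrite lsum_plus, !lsum_scal, !lsum_minus. reflexivity.
Qed.

Lemma dr_decr f g x v : ((1 <= x v)%nat -> f (decr x v) = g) ->
  dr x v * (f (decr x v) - f x) = dr x v * (g - f x).
Proof.
  intros H. destruct (x v) as [|k] eqn:E.
  - rewrite dr_zero by auto. ring.
  - rewrite H by lia. reflexivity.
Qed.

Lemma Gen_Sh h x : Gen (Sh nV h) x = sumV nV (fun v => (lam v - dr x v) * h v).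
Proof.
  unfold Gen. rewrite !sumV_lsum. apply lsum_ext. intros v Hv. apply inV_seq in Hv.
  rewrite (dr_decr _ (Sh nV h x - h v)) by (intros; apply Sh_decr; auto).
  rewrite Sh_incr by auto. ring.
Qed.

Lemma Gen_Sh_sq h x :
  Gen (fun y => Sh nV h y * Sh nV h y) x =
  2 * Sh nV h x * sumV nV (fun v => (lam v - dr x v) * h v) +
  sumV nV (fun v => (lam v + dr x v) * (h v * h v)).
Proof.
  unfold Gen. rewrite !sumV_lsum. rewrite <- lsum_scal, <- lsum_plus. apply lsum_ext.
  intros v Hv. apply inV_seq in Hv.
  rewrite (dr_decr (fun y => Sh nV h y * Sh nV h y) ((Sh nV h x - h v) * (Sh nV h x - h v))) by (intros; rewrite Sh_decr; auto).
  rewrite Sh_incr by auto. ring.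
Qed.

Lemma Gen_pow th x D : Dnat nV x = S D ->
  Gen (fun y => 1 - th ^ Dnat nV y) x = th ^ D * (1 - th) * (th * Lam - sumV nV (fun v => dr x v)).
Proof.
  intros HD. unfold Gen, Lam. rewrite !sumV_lsum.
  rewrite <- lsum_scal, <- lsum_minus, <- lsum_scal. apply lsum_ext. intros v Hv.
  apply inV_seq in Hv.
  rewrite (dr_decr (fun y => 1 - th ^ Dnat nV y) (1 - th ^ D)).
  - rewrite Dnat_incr, HD by auto. simpl. ring.
  - intros Hx. pose proof (Dnat_decr nV x v Hv Hx). rewrite HD in H. injection H as H. rewrite H. reflexivity.
Qed.
End Ops.

Definition psum (l : list (R * (nat -> bool))) (F : R * (nat -> bool) -> R) : R :=
  fold_right (fun p acc => F p + acc) 0 l.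

Lemma convZ_bounds nV par g v : in_convZ nV par g -> inV nV v -> 0 <= g v <= 1.
Proof.
  intros [l [H1 [H2 H3]]] Hv. rewrite (H3 v Hv). rewrite <- H2. clear H2 H3.
  induction l as [|p l IH]; simpl; [lra|].
  destruct (H1 p (or_introl eq_refl)) as [Hp _].
  assert (IH' : forall p, In p l -> 0 <= fst p /\ inZ nV par (snd p)) by (intros; apply H1; simpl; auto).
  specialize (IH IH'). destruct (snd p v); lra.
Qed.

Lemma lsum_psum L l (F : R * (nat -> bool) -> nat -> R) :
  lsum L (fun u => psum l (fun p => F p u)) = psum l (fun p => lsum L (F p)).
Proof.
  unfold psum. induction l as [|p l IH]; simpl.
  - apply lsum_zero.
  - rewrite lsum_plus. rewrite IH. reflexivity.
Qed.

Lemma convZ_chain nV par g w : in_convZ nV par g ->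
  sumV nV (fun u => if ancbarb nV par u w then g u else 0) <= 1.
Proof.
  intros [l [H1 [H2 H3]]]. rewrite sumV_lsum.
  rewrite (lsum_ext _ _ (fun u => psum l (fun p =>
             fst p * (if ancbarb nV par u w then (if snd p u then 1 else 0) else 0)))).
  2:{ intros u Hu. apply inV_seq in Hu. rewrite (H3 u Hu). clear H2 H3 H1.
      destruct (ancbarb nV par u w).
      - unfold psum. induction l as [|p l IH]; simpl; [reflexivity|]. rewrite IH.
        destruct (snd p u); ring.
      - unfold psum. induction l as [|p l IH]; simpl; [reflexivity|].
        rewrite Rmult_0_r, Rplus_0_l. exact IH. }
  rewrite lsum_psum. apply Rle_trans with (psum l (fun p => fst p)); [|unfold psum; lra].
  clear H2 H3.
  induction l as [|p l IH]; [unfold psum; simpl; lra|].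
  destruct (H1 p (or_introl eq_refl)) as [Hp HZ].
  assert (IH' : forall p, In p l -> 0 <= fst p /\ inZ nV par (snd p)) by (intros; apply H1; simpl; auto).
  specialize (IH IH'). unfold psum in IH |- *. simpl.
  apply Rplus_le_compat; [|exact IH].
  rewrite lsum_scal. rewrite <- (Rmult_1_r (fst p)) at 2. apply Rmult_le_compat_l; auto.
  apply lsum_le_one; [apply seq_NoDup| |].
  - intros v _. destruct (ancbarb nV par v w), (snd p v); auto.
  - intros u v Hu Hv Eu Ev. apply inV_seq in Hu. apply inV_seq in Hv.
    destruct (ancbarb nV par u w) eqn:Au; [|lra]. destruct (snd p u) eqn:Zu; [|lra].
    destruct (ancbarb nV par v w) eqn:Av; [|lra]. destruct (snd p v) eqn:Zv; [|lra].
    destruct (Nat.eq_dec u v) as [E|E]; auto. exfalso.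
    destruct (chain_comparable nV par u v w Au Av E) as [A|A].
    + apply (HZ v u Hv A Zv Zu).
    + apply (HZ u v Hu A Zu Zv).
Qed.

Definition hw nV par (r : nat -> R) w := fun u => if ancbarb nV par u w then / r u else 0.

Lemma is_zero_zero nV : is_zero nV zero_state = true.
Proof. unfold is_zero. apply forallb_forall. intros; reflexivity. Qed.

Lemma rho_eq nV par lam r w :
  sumV nV (fun v => lam v * hw nV par r w v) = sumV nV (fun u => if ancbarb nV par u w then lam u / r u else 0).
Proof.
  rewrite !sumV_lsum. apply lsum_ext. intros v _. unfold hw. destruct (ancbarb nV par v w); unfold Rdiv; ring.
Qed.

Lemma necessity nV par lam r gam w :
  (forall v, inV nV v -> 0 <= lam v) ->
  (forall v, inV nV v -> 0 < r v) ->
  is_scheme nV par gam -> inV nV w ->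
  1 <= sumV nV (fun u => if ancbarb nV par u w then lam u / r u else 0) ->
  ~ positive_recurrent nV lam r gam.
Proof.
  intros Hlam Hr Hs Hw Hrho.
  assert (Hg0 : forall x v, inV nV v -> 0 <= gam x v) by (intros x v Hv; apply (convZ_bounds nV par _ v (Hs x) Hv)).
  assert (Hg1 : forall x v, inV nV v -> gam x v <= 1) by (intros x v Hv; apply (convZ_bounds nV par _ v (Hs x) Hv)).
  rewrite sumV_lsum in Hrho.
  destruct (lsum_pos_exists (seq 1 nV) (fun u => if ancbarb nV par u w then lam u / r u else 0) ltac:(lra)) as [v0 [Hv0 Hne]].
  destruct (ancbarb nV par v0 w) eqn:Av0; [|contradiction].
  apply inV_seq in Hv0.
  assert (Hl0 : 0 < lam v0).
  { pose proof (Hlam v0 Hv0). destruct (Req_dec (lam v0) 0) as [E|E]; [|lra].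
    rewrite E in Hne. unfold Rdiv in Hne. rewrite Rmult_0_l in Hne. contradiction. }
  assert (HLam : 0 < Lam nV lam).
  { unfold Lam. rewrite sumV_lsum. eapply Rlt_le_trans; [exact Hl0|].
    apply lsum_single_le; [intros; apply Hlam, inV_seq; auto|apply inV_seq; auto]. }
  assert (Hq : forall x, 0 < q nV lam r gam x).
  { intros x. eapply Rlt_le_trans; [exact HLam|]. apply q_ge; auto. }
  intros [H0|H1].
  - specialize (Hq zero_state). unfold q in Hq. lra.
  - set (c := sumV nV (fun u => / r u)).
    assert (Hc : 0 <= c).
    { unfold c. rewrite sumV_lsum. apply lsum_nonneg. intros u Hu.
      left. apply Rinv_0_lt_compat, Hr, inV_seq; auto. }
    assert (Hh0 : forall u, inV nV u -> 0 <= hw nV par r w u).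
    { intros u Hu. unfold hw. destruct (ancbarb nV par u w); [|lra].
      left. apply Rinv_0_lt_compat; auto. }
    assert (Hhc : forall u, inV nV u -> hw nV par r w u <= c).
    { intros u Hu. unfold c. rewrite sumV_lsum. eapply Rle_trans;
        [|apply (lsum_single_le _ (fun u => / r u)); [|apply inV_seq; exact Hu]].
      - unfold hw. destruct (ancbarb nV par u w); [lra|]. left; apply Rinv_0_lt_compat; auto.
      - intros v Hv. left. apply Rinv_0_lt_compat, Hr, inV_seq; auto. }
    apply (nec_main nV lam r gam Hlam Hr Hg0 Hg1 Hq (Sh nV (hw nV par r w)) c v0); auto.
    + intros x Z. apply Sh_zero; auto.
    + intros x Z. rewrite (Pop_Gen nV lam r gam Hq). rewrite Gen_Sh.
      assert (0 <= sumV nV (fun v => (lam v - dr r gam x v) * hw nV par r w v)); [|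
        pose proof (Hq x); assert (0 <= sumV nV (fun v => (lam v - dr r gam x v) * hw nV par r w v) / q nV lam r gam x) by (apply Rdiv_le_0_compat; auto); lra].
      rewrite sumV_lsum, (lsum_ext _ _ (fun v => lam v * hw nV par r w v - dr r gam x v * hw nV par r w v)) by (intros; ring).
      rewrite lsum_minus. rewrite <- !sumV_lsum. rewrite rho_eq, !sumV_lsum.
      assert (lsum (seq 1 nV) (fun v => dr r gam x v * hw nV par r w v) <= 1); [|lra].
      eapply Rle_trans; [|apply (convZ_chain nV par (gam x) w (Hs x))].
      rewrite sumV_lsum. apply lsum_le. intros v Hv. apply inV_seq in Hv.
      unfold dr, drate, hw. pose proof (Hr v Hv). pose proof (Hg0 x v Hv).
      destruct (ancbarb nV par v w); [|lra].
      destruct (Nat.leb 1 (x v)); [|nra].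
      right. field. lra.
    + intros x v Hv. rewrite Sh_incr by auto. pose proof (Hhc v Hv). split; [lra|].
      destruct (x v) as [|k] eqn:E.
      * rewrite Sh_ext_decr0 by auto. lra.
      * rewrite Sh_decr by (auto; lia). pose proof (Hh0 v Hv). lra.
    + rewrite Sh_incr by auto. rewrite Sh_zero by apply is_zero_zero.
      unfold hw. rewrite Av0. rewrite Rplus_0_l. apply Rinv_0_lt_compat; auto.
Qed.

Definition gam_top nV par : state -> nat -> R := fun x v => if top nV par x v then 1 else 0.

Lemma top_scheme nV par : is_scheme nV par (gam_top nV par).
Proof.
  intros x. exists [(1, top nV par x)]. split; [|split].
  - intros p [<-|[]]. simpl. split; [lra|apply top_inZ].
  - simpl. ring.
  - intros v _. simpl. unfold gam_top. destruct (top nV par x v); ring.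
Qed.

Lemma dr_top nV par r x a : top nV par x a = true -> dr r (gam_top nV par) x a = r a.
Proof.
  intros H. unfold dr, drate, gam_top. rewrite H. apply top_spec in H as [H _].
  apply Nat.leb_le in H. rewrite H. ring.
Qed.

Lemma pow_le1 t n : 0 <= t <= 1 -> t ^ n <= 1.
Proof.
  intros Ht. induction n as [|n IH]; simpl; [lra|].
  assert (0 <= t ^ n) by (apply pow_le; lra). nra.
Qed.

Lemma pow_antimono t m n : 0 <= t <= 1 -> (m <= n)%nat -> t ^ n <= t ^ m.
Proof.
  intros Ht H. induction H as [|n H IH]; [lra|]. simpl.
  assert (0 <= t ^ n) by (apply pow_le; lra). nra.
Qed.

Lemma ancbarb_refl nV par w : ancbarb nV par w w = true.
Proof. unfold ancbarb. rewrite Nat.eqb_refl. reflexivity. Qed.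

Lemma suff_lyap nV par lam r :
  is_rooted_tree nV par ->
  (forall v, inV nV v -> 0 <= lam v) ->
  (forall v, inV nV v -> 0 < r v) ->
  (forall w, inV nV w -> sumV nV (fun u => if ancbarb nV par u w then lam u / r u else 0) < 1) ->
  0 < Lam nV lam ->
  exists U : state -> R, (forall x, 0 <= U x) /\
    forall x, is_zero nV x = false -> Pop nV lam r (gam_top nV par) U x <= U x - 1.
Proof.
  intros HT Hlam Hr Hrho HLam.
  set (g := gam_top nV par).
  assert (Hg0 : forall x v, inV nV v -> 0 <= g x v) by (intros; unfold g, gam_top; destruct top; lra).
  assert (Hg1 : forall x v, inV nV v -> g x v <= 1) by (intros; unfold g, gam_top; destruct top; lra).
  assert (Hq : forall x, 0 < q nV lam r g x).
  { intros x. eapply Rlt_le_trans; [exact HLam|]. apply q_ge; auto. }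
  destruct (list_min (seq 1 nV) (fun w => 1 - sumV nV (fun u => if ancbarb nV par u w then lam u / r u else 0)))
    as [eps [Heps Heps']].
  { intros w Hw. apply inV_seq in Hw. specialize (Hrho w Hw). lra. }
  destruct (list_min (seq 1 nV) (fun w => / r w)) as [nu [Hnu Hnu']].
  { intros w Hw. apply Rinv_0_lt_compat, Hr, inV_seq; auto. }
  destruct (list_min (seq 1 nV) r) as [s0 [Hs0 Hs0']].
  { intros w Hw. apply Hr, inV_seq; auto. }
  set (h := hw nV par r).
  assert (Hh0 : forall w u, inV nV u -> 0 <= h w u).
  { intros w u Hu. unfold h, hw. destruct ancbarb; [left; apply Rinv_0_lt_compat; auto|lra]. }
  set (Bw := fun w => sumV nV (fun v => (lam v + r v) * (h w v * h w v))).
  set (B := sumV nV Bw).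
  assert (HB : 0 <= B).
  { unfold B, Bw. rewrite sumV_lsum. apply lsum_nonneg. intros w _. rewrite sumV_lsum.
    apply lsum_nonneg. intros v Hv. apply inV_seq in Hv. pose proof (Hlam v Hv). pose proof (Hr v Hv).
    apply Rmult_le_pos; [lra|]. pose proof (Hh0 w v Hv). nra. }
  set (K := B + Qmax nV lam r).
  assert (HK : 0 <= K).
  { unfold K, Qmax. rewrite sumV_lsum. assert (0 <= lsum (seq 1 nV) (fun v => lam v + r v)); [|lra].
    apply lsum_nonneg. intros v Hv. apply inV_seq in Hv. pose proof (Hlam v Hv). pose proof (Hr v Hv). lra. }
  set (th := s0 / (s0 + 2 * Lam nV lam)).
  assert (Hth0 : 0 < th) by (apply Rdiv_lt_0_compat; lra).
  assert (Hthe : th * (s0 + 2 * Lam nV lam) = s0) by (unfold th; field; lra).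
  assert (Hth1 : th < 1) by nra.
  assert (HthL : th * Lam nV lam <= s0 / 2) by nra.
  destruct (INR_archimed (2 * eps * nu) K) as [D0 HD0].
  { apply Rmult_lt_0_compat; [lra|auto]. }
  assert (Hpd : 0 < th ^ D0 * (1 - th) * (s0 / 2)).
  { apply Rmult_lt_0_compat; [apply Rmult_lt_0_compat; [apply pow_lt; auto|lra]|lra]. }
  set (M := K / (th ^ D0 * (1 - th) * (s0 / 2))).
  assert (HM0 : 0 <= M) by (apply Rdiv_le_0_compat; auto).
  assert (HMe : M * (th ^ D0 * (1 - th) * (s0 / 2)) = K) by (unfold M, Rdiv; rewrite Rmult_assoc, Rinv_l by lra; ring).
  set (V := fun y => sumV nV (fun w => Sh nV (h w) y * Sh nV (h w) y)).
  exists (fun y => V y + M * (1 - th ^ Dnat nV y)). split.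
  - intros x. assert (0 <= V x).
    { unfold V. rewrite sumV_lsum. apply lsum_nonneg. intros; nra. }
    assert (th ^ Dnat nV x <= 1) by (apply pow_le1; lra).
    assert (0 <= M * (1 - th ^ Dnat nV x)) by (apply Rmult_le_pos; lra). lra.
  - intros x Z.
    destruct (Dnat nV x) as [|D'] eqn:HD; [pose proof (Dnat_pos nV x Z); lia|].
    assert (HA : Gen nV lam r g V x <= - 2 * eps * nu * INR (Dnat nV x) + B).
    { unfold V. rewrite Gen_sumw.
      assert (Hwb : forall w, inV nV w ->
         Gen nV lam r g (fun y => Sh nV (h w) y * Sh nV (h w) y) x <= - 2 * eps * Sh nV (h w) x + Bw w).
      { intros w Hw. rewrite Gen_Sh_sq.
        assert (HS0 : 0 <= Sh nV (h w) x) by (apply Sh_nonneg; auto).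
        assert (H2 : Sh nV (h w) x * sumV nV (fun v => (lam v - dr r g x v) * h w v) <= - eps * Sh nV (h w) x).
        { destruct (Req_dec (Sh nV (h w) x) 0) as [E|E]; [rewrite E; lra|].
          assert (Hdr : 1 <= sumV nV (fun v => dr r g x v * h w v)).
          { unfold Sh in E. rewrite sumV_lsum in E.
            destruct (lsum_pos_exists (seq 1 nV) (fun u => h w u * INR (x u))) as [u [Hu Hne]].
            { unfold Sh in HS0. rewrite sumV_lsum in HS0. lra. }
            apply inV_seq in Hu.
            destruct (ancbarb nV par u w) eqn:Au; [|unfold h, hw in Hne; rewrite Au in Hne; lra].
            destruct (x u) as [|k] eqn:Exu; [simpl in Hne; lra|].
            destruct (top_exists nV par x w HT Hw) as [a [Ha [Aa Ta]]].
            { exists u. split; auto. lia. }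
            rewrite sumV_lsum. eapply Rle_trans; [|apply (lsum_single_le _ (fun v => dr r g x v * h w v) a)].
            - unfold g. rewrite dr_top by auto. unfold h, hw. rewrite Aa. right. field.
              apply Rgt_not_eq, Hr; auto.
            - intros v Hv. apply inV_seq in Hv. apply Rmult_le_pos; [apply (dr_nonneg nV r g Hr Hg0); auto|auto].
            - apply inV_seq; auto. }
          assert (Hsplit : sumV nV (fun v => (lam v - dr r g x v) * h w v) =
                   sumV nV (fun u => if ancbarb nV par u w then lam u / r u else 0) -
                   sumV nV (fun v => dr r g x v * h w v)).
          { rewrite <- rho_eq. rewrite !sumV_lsum. rewrite <- lsum_minus. apply lsum_ext. intros; unfold h; ring. }
          assert (Hr1 := Heps' w ltac:(apply inV_seq; auto)). simpl in Hr1.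
          rewrite Hsplit. assert (0 < Sh nV (h w) x) by lra. nra. }
        assert (H3 : sumV nV (fun v => (lam v + dr r g x v) * (h w v * h w v)) <= Bw w).
        { unfold Bw. rewrite !sumV_lsum. apply lsum_le. intros v Hv. apply inV_seq in Hv.
          apply Rmult_le_compat_r; [pose proof (Hh0 w v Hv); nra|].
          pose proof (dr_le nV r g Hr Hg0 Hg1 x v Hv). lra. }
        lra. }
      assert (HS : nu * INR (Dnat nV x) <= sumV nV (fun w => Sh nV (h w) x)).
      { rewrite Dnat_INR. unfold Sh at 1. rewrite !sumV_lsum. rewrite <- lsum_scal.
        apply lsum_le. intros w Hw. apply inV_seq in Hw.
        unfold Sh. rewrite sumV_lsum.
        eapply Rle_trans; [|apply (lsum_single_le _ (fun u => h w u * INR (x u)) w)].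
        - unfold h, hw. rewrite ancbarb_refl. pose proof (pos_INR (x w)).
          pose proof (Hnu' w ltac:(apply inV_seq; auto)). nra.
        - intros u Hu. apply Rmult_le_pos; [apply Hh0, inV_seq; auto|apply pos_INR].
        - apply inV_seq; auto. }
      apply Rle_trans with (sumV nV (fun w => - 2 * eps * Sh nV (h w) x + Bw w)).
      - rewrite !sumV_lsum. apply lsum_le. intros w Hw. apply Hwb, inV_seq; auto.
      - unfold B. rewrite !sumV_lsum in *. rewrite lsum_plus, lsum_scal. nra. }
    assert (HBp : Gen nV lam r g (fun y => 1 - th ^ Dnat nV y) x <= - (th ^ D' * (1 - th) * (s0 / 2))).
    { rewrite (Gen_pow nV lam r g th x D' HD).
      assert (Hsd : s0 <= sumV nV (fun v => dr r g x v)).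
      { destruct (is_zero_false nV x Z) as [u [Hu Hxu]].
        destruct (top_exists nV par x u HT Hu) as [a [Ha [_ Ta]]].
        { exists u. split; [apply ancbarb_refl|auto]. }
        rewrite sumV_lsum. eapply Rle_trans; [|apply (lsum_single_le _ (fun v => dr r g x v) a)].
        - unfold g. rewrite dr_top by auto. apply Hs0', inV_seq; auto.
        - intros v Hv. apply (dr_nonneg nV r g Hr Hg0); auto. apply inV_seq; auto.
        - apply inV_seq; auto. }
      assert (0 <= th ^ D' * (1 - th)) by (apply Rmult_le_pos; [apply pow_le; lra|lra]).
      nra. }
    assert (HGU : Gen nV lam r g (fun y => V y + M * (1 - th ^ Dnat nV y)) x <= - Qmax nV lam r).
    { rewrite Gen_plus, Gen_scal.
      assert (HMp : 0 <= M * (th ^ D' * (1 - th) * (s0 / 2))).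
      { apply Rmult_le_pos; auto. apply Rmult_le_pos; [apply Rmult_le_pos; [apply pow_le|]|]; lra. }
      assert (HM' : M * Gen nV lam r g (fun y => 1 - th ^ Dnat nV y) x <= - (M * (th ^ D' * (1 - th) * (s0 / 2)))).
      { apply Rmult_le_compat_l with (r := M) in HBp; auto. lra. }
      rewrite HD in HA.
      destruct (le_lt_dec D0 (S D')) as [Hc|Hc].
      - assert (INR D0 <= INR (S D')) by (apply le_INR; auto).
        assert (0 < 2 * eps * nu) by (apply Rmult_lt_0_compat; [lra|auto]).
        assert (INR D0 * (2 * eps * nu) <= INR (S D') * (2 * eps * nu)) by (apply Rmult_le_compat_r; lra).
        unfold K in HD0. lra.
      - assert (th ^ D0 <= th ^ D') by (apply pow_antimono; [lra|lia]).
        assert (K <= M * (th ^ D' * (1 - th) * (s0 / 2))).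
        { rewrite <- HMe. apply Rmult_le_compat_l; auto. apply Rmult_le_compat_r; [lra|].
          apply Rmult_le_compat_r; lra. }
        assert (0 <= 2 * eps * nu * INR (S D')).
        { apply Rmult_le_pos; [apply Rmult_le_pos; lra|apply pos_INR]. }
        unfold K in *. lra. }
    rewrite (Pop_Gen nV lam r g Hq).
    pose proof (Hq x). pose proof (q_le nV lam r g Hr Hg0 Hg1 x).
    assert (Gen nV lam r g (fun y => V y + M * (1 - th ^ Dnat nV y)) x / q nV lam r g x <= -1).
    { apply Rmult_le_reg_r with (q nV lam r g x); auto. unfold Rdiv.
      rewrite Rmult_assoc, Rinv_l by lra. lra. }
    cbv beta in *. rewrite HD. lra.
Qed.

Theorem proposition2 (nV : nat) (par : nat -> nat) (lam r : nat -> R) :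
  is_rooted_tree nV par ->
  (forall v, inV nV v -> 0 <= lam v) ->
  (forall v, inV nV v -> 0 < r v) ->
  ((exists gam : state -> nat -> R,
      is_scheme nV par gam /\ positive_recurrent nV lam r gam)
   <->
   (forall v, inV nV v ->
      sumV nV (fun u => if ancbarb nV par u v then lam u / r u else 0) < 1)).
Proof.
  intros HT Hlam Hr. split.
  - intros [gam [Hs Hpr]] w Hw.
    destruct (Rlt_le_dec (sumV nV (fun u => if ancbarb nV par u w then lam u / r u else 0)) 1)
      as [H|H]; auto.
    exfalso. apply (necessity nV par lam r gam w Hlam Hr Hs Hw H Hpr).
  - intros Hrho. exists (gam_top nV par). split; [apply top_scheme|].
    set (g := gam_top nV par).
    assert (Hg0 : forall x v, inV nV v -> 0 <= g x v) by (intros; unfold g, gam_top; destruct top; lra).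
    pose proof (Lam_nonneg nV lam Hlam) as HL.
    destruct (Rle_lt_or_eq_dec _ _ HL) as [HLam|HLam].
    + right.
      assert (Hq : forall x, 0 < q nV lam r g x).
      { intros x. eapply Rlt_le_trans; [exact HLam|]. apply q_ge; auto. }
      destruct (suff_lyap nV par lam r HT Hlam Hr Hrho HLam) as [U [HU0 HUd]].
      apply (suff_main nV lam r g Hlam Hr Hg0 Hq U HU0 HUd HLam).
    + left. rewrite HLam. unfold Lam, qrate. rewrite !sumV_lsum. apply lsum_ext.
      intros v _. unfold drate, zero_state. simpl. ring.
Qed.
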